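(* Let $\sigma\subseteq[n]$ be an edge or a triangle on $\gamma_2$. Then there is a triangulation $T(\sigma)\in S(n,2)$ such that $\sigma\in T(\sigma)$ and, for every edge or triangle $\tau\subseteq[n]$ with $\tau\ne\sigma$ such that either $\tau$ does not overlap $\sigma$ in $\mathbb{R}^2$ or $\tau<_3\sigma$, we have $\tau\le_3 T(\sigma)$.
   Context: $\gamma_d=\{(t,t^2,\dots,t^d):t\in\mathbb{R}\}$. Fix $t_1<\dots<t_n$ and the points $\gamma_2(t_i)$, identified with $i\in[n]$; $C(n,2)$ is their convex hull (a convex $n$-gon) and $S(n,2)$ the set of triangulations of $C(n,2)$ with vertices in $[n]$. Simplices (edges, triangles) are subsets of $[n]$ identified with their convex hulls; $\sigma,\tau$ overlap if $\mathrm{conv}(\sigma)\cap\mathrm{conv}(\tau)\supsetneq\mathrm{conv}(\sigma\cap\tau)$. The height function $h_\sigma:\mathrm{conv}(\sigma)\to\mathbb{R}$ gives the last coordinate of the point in the convex hull of the lifted points $\gamma_3(t_i)$, $i\in\sigma$, projecting to $p$. $\sigma<_3\tau$ means $\sigma,\tau$ overlap in $\mathbb{R}^2$ and $h_\sigma\le h_\tau$ on the common domain. For $T\in S(n,2)$, $h_T(p)=h_\rho(p)$ for $p\in\mathrm{conv}(\rho)$, $\rho\in T$, and $\tau\le_3T$ means $h_\tau\le h_T$ on $\mathrm{conv}(\tau)$. *)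

(* Defs.v *)
From HB Require Import structures.
From mathcomp Require Import all_boot all_order all_algebra.
From mathcomp Require Import reals.
Set Implicit Arguments. Unset Strict Implicit. Unset Printing Implicit Defensive.
Import Order.TTheory GRing.Theory Num.Theory.
Local Open Scope ring_scope.

Section Cyclic.
Variables (R : realType) (n : nat) (t : 'I_n -> R).

Definition convw (S : {set 'I_n}) (l : 'I_n -> R) : Prop :=
  [/\ forall i, 0 <= l i, forall i, i \notin S -> l i = 0 & \sum_i l i = 1].

(* gamma_2(t_i) = (t_i, t_i^2) ; p \in conv(S) *)
Definition in_conv (S : {set 'I_n}) (p : R * R) : Prop :=
  exists l, convw S l /\ p = (\sum_i l i * t i, \sum_i l i * t i ^+ 2).

(* y = h_S(p): last coordinate of the point of conv{gamma_3(t_i) : i in S}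
   projecting to p *)
Definition lifts (S : {set 'I_n}) (p : R * R) (y : R) : Prop :=
  exists l, [/\ convw S l, p = (\sum_i l i * t i, \sum_i l i * t i ^+ 2)
             & y = \sum_i l i * t i ^+ 3].

Definition overlap (s u : {set 'I_n}) : Prop :=
  (forall p, in_conv (s :&: u) p -> in_conv s p /\ in_conv u p) /\
  exists p, [/\ in_conv s p, in_conv u p & ~ in_conv (s :&: u) p].

Definition below3 (s u : {set 'I_n}) : Prop :=
  overlap s u /\ forall p y z, lifts s p y -> lifts u p z -> y <= z.

Definition edge_or_triangle (s : {set 'I_n}) : Prop := #|s| = 2%N \/ #|s| = 3%N.

Definition is_triangulation (T : {set {set 'I_n}}) : Prop :=
  [/\ forall r, r \in T -> #|r| = 3%N,
      forall p, in_conv setT p <-> exists2 r, r \in T & in_conv r p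
    & forall r r', r \in T -> r' \in T -> r != r' -> ~ overlap r r'].

Definition simplex_of (s : {set 'I_n}) (T : {set {set 'I_n}}) : Prop :=
  exists2 r, r \in T & s \subset r.

Definition le3T (s : {set 'I_n}) (T : {set {set 'I_n}}) : Prop :=
  forall r, r \in T -> forall p y z, lifts s p y -> lifts r p z -> y <= z.

End Cyclic.

(* Main.v *)
Require Import Defs.
From HB Require Import structures.
From mathcomp Require Import all_boot all_order all_algebra.
From mathcomp Require Import reals.
From mathcomp Require Import ring lra zify.
From Stdlib Require Import Classical_Prop.
Import Order.TTheory GRing.Theory Num.Theory.
Local Open Scope ring_scope.
Set Implicit Arguments. Unset Strict Implicit. Unset Printing Implicit Defensive.

Section Main.
Variables (R : realType) (n : nat) (t : 'I_n -> R).
Hypothesis ht : forall i j : 'I_n, (i < j)%N -> t i < t j.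

Definition pt (l : 'I_n -> R) := (\sum_i l i * t i, \sum_i l i * t i ^+ 2).

Lemma t_lt (i j : 'I_n) : (i < j)%N = (t i < t j).
Proof.
case: (ltngtP i j) => h; first by rewrite ht.
- by apply/esym/negbTE; rewrite -leNgt ltW ?ht.
- have -> : i = j by apply: val_inj.
  by rewrite ltxx.
Qed.

Lemma t_inj (i j : 'I_n) : i != j -> t i != t j.
Proof.
move=> ij; case: (ltngtP i j) => h.
- by rewrite lt_eqF // ht.
- by rewrite gt_eqF // ht.
- by case/eqP: ij; apply: val_inj.
Qed.

Lemma sum_one (f : 'I_n -> R) k : (forall j, j != k -> f j = 0) -> \sum_j f j = f k.
Proof.
move=> H; rewrite (bigD1 k) //= big1 ?addr0 // => j /H.
Qed.

Lemma sum_quad (l : 'I_n -> R) a b c :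
  \sum_i l i * (a + b * t i + c * t i ^+ 2) =
  a * \sum_i l i + b * (pt l).1 + c * (pt l).2.
Proof.
rewrite /pt /= !mulr_sumr -!big_split /=; apply: eq_bigr => i _; ring.
Qed.

Lemma quad_same (l m : 'I_n -> R) a b c :
  \sum_i l i = \sum_i m i -> pt l = pt m ->
  \sum_i l i * (a + b * t i + c * t i ^+ 2) = \sum_i m i * (a + b * t i + c * t i ^+ 2).
Proof. by move=> h1 h2; rewrite !sum_quad h1 h2. Qed.

Lemma cub_same (l m : 'I_n -> R) (f : R -> R) a b c :
  (forall X, f X = X ^+ 3 + (a + b * X + c * X ^+ 2)) ->
  \sum_i l i = \sum_i m i -> pt l = pt m ->
  \sum_i l i * f (t i) - \sum_i m i * f (t i) =
  \sum_i l i * t i ^+ 3 - \sum_i m i * t i ^+ 3.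
Proof.
move=> hf h1 h2.
have E : forall (k : 'I_n -> R), \sum_i k i * f (t i) =
   \sum_i k i * t i ^+ 3 + \sum_i k i * (a + b * t i + c * t i ^+ 2).
  by move=> k; rewrite -big_split; apply: eq_bigr => i _; rewrite hf mulrDr.
rewrite !E (quad_same a b c h1 h2); ring.
Qed.

Lemma convw_sub (A B : {set 'I_n}) (l : 'I_n -> R) : A \subset B -> convw A l -> convw B l.
Proof.
move=> AB [h1 h2 h3]; split=> // i iB; apply: h2; apply: contra iB; exact: (subsetP AB).
Qed.

Lemma in_conv_sub (A B : {set 'I_n}) p : A \subset B -> in_conv t A p -> in_conv t B p.
Proof. by move=> AB [l [hl ->]]; exists l; split=> //; exact: convw_sub hl. Qed.


Lemma quad_exists (A : {set 'I_n}) k : (#|A| <= 2)%N -> k \notin A ->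
  exists a b c : R, (a + b * t k + c * t k ^+ 2 != 0) /\
    forall j, j \in A -> a + b * t j + c * t j ^+ 2 = 0.
Proof.
move=> hA kA.
have : (#|A| = 0 \/ #|A| = 1 \/ #|A| = 2)%N by lia.
case=> [|[]] /eqP.
- move/eqP/cards0_eq=> ->; exists 1, 0, 0; split; last by move=> j; rewrite inE.
  by rewrite !mul0r !addr0 oner_eq0.
- case/cards1P=> y Ay; subst A; exists (- t y), 1, 0; split.
  + rewrite mul0r addr0 mul1r addrC subr_eq0; apply: t_inj.
    by apply: contra kA => /eqP ->; rewrite inE.
  + by move=> j; rewrite inE => /eqP ->; rewrite mul0r addr0 mul1r addNr.
- case/cards2P=> y [z [_ Ayz]]; subst A.
  exists (t y * t z), (- (t y + t z)), 1; split.
  + have -> : t y * t z + - (t y + t z) * t k + 1 * t k ^+ 2 = (t k - t y) * (t k - t z) by ring.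
    rewrite mulf_eq0 !subr_eq0 negb_or; apply/andP; split; apply: t_inj;
      by apply: contra kA => /eqP ->; rewrite !inE eqxx ?orbT.
  + by move=> j; rewrite !inE => /orP[] /eqP ->; ring.
Qed.

Lemma uniq_w (A : {set 'I_n}) l m : (#|A| <= 3)%N -> convw A l -> convw A m ->
  pt l = pt m -> l =1 m.
Proof.
move=> hA [l0 lA l1] [m0 mA m1] hp k.
case kA: (k \in A); last by rewrite lA ?mA ?kA.
have hA' : (#|A :\ k| <= 2)%N by move: hA; rewrite (cardsD1 k A) kA add1n ltnS.
have [a [b [c [hk hj]]]] := quad_exists hA' (negbT (setD11 k A)).
have e : \sum_i l i = \sum_i m i by rewrite l1 m1.
have := quad_same a b c e hp.
have Z : forall (w : 'I_n -> R), (forall j, j \notin A -> w j = 0) ->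
   \sum_i w i * (a + b * t i + c * t i ^+ 2) = w k * (a + b * t k + c * t k ^+ 2).
  move=> w wA; apply: sum_one => j jk.
  case jA: (j \in A); last by rewrite wA ?jA // mul0r.
  by rewrite hj ?mulr0 // !inE jk jA.
rewrite (Z l lA) (Z m mA) => /eqP; rewrite -subr_eq0 -mulrBl mulf_eq0 (negbTE hk) orbF subr_eq0.
by move/eqP.
Qed.


Definition bump (x : 'I_n) (c : R) (j : 'I_n) : R := if j == x then c else 0.

Lemma sum_bump x c (f : 'I_n -> R) : \sum_j bump x c j * f j = c * f x.
Proof. by rewrite (@sum_one _ x) /bump ?eqxx // => j /negbTE ->; rewrite mul0r. Qed.

Lemma ord_neq (i j : 'I_n) : (i < j)%N -> (i == j) = false.
Proof. by move=> h; apply/eqP => e; rewrite e ltnn in h. Qed.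

Lemma transfer (A : {set 'I_n}) l (d : 'I_n -> R) x y : convw A l ->
  (forall j, j \notin A -> d j = 0) ->
  \sum_j d j = 0 -> \sum_j d j * t j = 0 -> \sum_j d j * t j ^+ 2 = 0 ->
  0 < d x -> 0 < d y -> (forall j, j != x -> j != y -> d j <= 0) ->
  exists l', [/\ convw A l', pt l' = pt l, (l' x == 0) || (l' y == 0) &
    forall j, l' j != 0 -> (l j != 0) || (d j != 0)].
Proof.
move=> [l0 lA l1] dA d0 d1 d2 dx dy dj.
pose al := if l x / d x <= l y / d y then l x / d x else l y / d y.
have hx : al <= l x / d x by rewrite /al; case: ifP => // /negbT; rewrite -ltNge => /ltW.
have hy : al <= l y / d y by rewrite /al; case: ifP.
have a0 : 0 <= al by rewrite /al; case: ifP => _; apply: divr_ge0 => //; apply: ltW.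
exists (fun j => l j - al * d j); split.
- split.
  + move=> j; rewrite subr_ge0.
    case: (eqVneq j x) => [->|jx]; first by rewrite -ler_pdivlMr // mulrC.
    case: (eqVneq j y) => [->|jy]; first by rewrite -ler_pdivlMr // mulrC.
    apply: le_trans (l0 j); rewrite mulr_ge0_le0 //; exact: dj.
  + by move=> j jA; rewrite lA // dA // mulr0 subr0.
  + by rewrite sumrB -mulr_sumr d0 mulr0 subr0.
- rewrite /pt; congr pair.
  + under eq_bigr do rewrite mulrBl -mulrA.
    by rewrite sumrB -mulr_sumr d1 mulr0 subr0.
  + under eq_bigr do rewrite mulrBl -mulrA.
    by rewrite sumrB -mulr_sumr d2 mulr0 subr0.
- rewrite /al; case: ifP => _.
  + by rewrite divfK ?subrr ?eqxx // gt_eqF.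
  + by rewrite divfK ?subrr ?eqxx ?orbT // gt_eqF.
- move=> j; apply: contraR; rewrite negb_or !negbK => /andP[/eqP -> /eqP ->].
  by rewrite mulr0 subrr.
Qed.


Lemma dep4 (A : {set 'I_n}) l (x1 x2 x3 x4 : 'I_n) :
  (x1 < x2)%N -> (x2 < x3)%N -> (x3 < x4)%N ->
  x1 \in A -> x2 \in A -> x3 \in A -> x4 \in A -> convw A l ->
  (exists l', [/\ convw A l', pt l' = pt l, (l' x1 == 0) || (l' x3 == 0) &
     forall j, l' j != 0 -> [|| l j != 0, j == x1, j == x2, j == x3 | j == x4]]) /\
  (exists l', [/\ convw A l', pt l' = pt l, (l' x2 == 0) || (l' x4 == 0) &
     forall j, l' j != 0 -> [|| l j != 0, j == x1, j == x2, j == x3 | j == x4]]).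
Proof.
move=> h12 h23 h34 A1 A2 A3 A4 hl.
have h13 : (x1 < x3)%N by lia.
have h14 : (x1 < x4)%N by lia.
have h24 : (x2 < x4)%N by lia.
have e12 : (x1 == x2) = false by apply: ord_neq.
have e21 : (x2 == x1) = false by apply/eqP => E; move: (h12); rewrite E ltnn.
have e13 : (x1 == x3) = false by apply: ord_neq.
have e31 : (x3 == x1) = false by apply/eqP => E; move: (h13); rewrite E ltnn.
have e14 : (x1 == x4) = false by apply: ord_neq.
have e41 : (x4 == x1) = false by apply/eqP => E; move: (h14); rewrite E ltnn.
have e23 : (x2 == x3) = false by apply: ord_neq.
have e32 : (x3 == x2) = false by apply/eqP => E; move: (h23); rewrite E ltnn.
have e24 : (x2 == x4) = false by apply: ord_neq.
have e42 : (x4 == x2) = false by apply/eqP => E; move: (h24); rewrite E ltnn.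
have e34 : (x3 == x4) = false by apply: ord_neq.
have e43 : (x4 == x3) = false by apply/eqP => E; move: (h34); rewrite E ltnn.
set X1 := t x1; set X2 := t x2; set X3 := t x3; set X4 := t x4.
have t12 : X1 < X2 by apply: ht.
have t23 : X2 < X3 by apply: ht.
have t34 : X3 < X4 by apply: ht.
pose c1 := (X3 - X2) * (X4 - X2) * (X4 - X3).
pose c2 := - ((X3 - X1) * (X4 - X1) * (X4 - X3)).
pose c3 := (X2 - X1) * (X4 - X1) * (X4 - X2).
pose c4 := - ((X2 - X1) * (X3 - X1) * (X3 - X2)).
have p1 : 0 < c1 by rewrite !mulr_gt0 // subr_gt0 //; lra.
have p3 : 0 < c3 by rewrite !mulr_gt0 // subr_gt0 //; lra.
have p2 : c2 < 0 by rewrite oppr_lt0 !mulr_gt0 // subr_gt0 //; lra.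
have p4 : c4 < 0 by rewrite oppr_lt0 !mulr_gt0 // subr_gt0 //; lra.
pose d (e : R) j := e * (bump x1 c1 j + bump x2 c2 j + bump x3 c3 j + bump x4 c4 j).
have dsum : forall e (f : 'I_n -> R), \sum_j d e j * f j =
   e * (c1 * f x1 + c2 * f x2 + c3 * f x3 + c4 * f x4).
  move=> e f; rewrite /d; under eq_bigr do rewrite -mulrA.
  rewrite -mulr_sumr; congr (_ * _).
  under eq_bigr do rewrite !mulrDl.
  by rewrite !big_split /= !sum_bump.
have dA : forall e j, j \notin A -> d e j = 0.
  move=> e j jA; rewrite /d /bump.
  have F : forall x, x \in A -> (j == x) = false.
    by move=> x xA; apply/eqP => ex; move: jA; rewrite ex xA.
  by rewrite !F // !addr0 mulr0.
have d0 : forall e, \sum_j d e j = 0.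
  move=> e; have -> : \sum_j d e j = \sum_j d e j * (fun=> 1 : R) j.
    by apply: eq_bigr => j _; rewrite mulr1.
  rewrite dsum !mulr1 /c1 /c2 /c3 /c4; ring.
have d1 : forall e, \sum_j d e j * t j = 0.
  by move=> e; rewrite dsum /c1 /c2 /c3 /c4 -/X1 -/X2 -/X3 -/X4; ring.
have d2 : forall e, \sum_j d e j * t j ^+ 2 = 0.
  by move=> e; rewrite dsum /c1 /c2 /c3 /c4 -/X1 -/X2 -/X3 -/X4; ring.
have dv : forall e j, d e j = e * (if j == x1 then c1 else if j == x2 then c2
     else if j == x3 then c3 else if j == x4 then c4 else 0).
  move=> e j; rewrite /d /bump.
  have [->|j1] := eqVneq j x1.
    by rewrite !ord_neq // !addr0.
  have [->|j2] := eqVneq j x2.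
    by rewrite ord_neq // ?ord_neq // !(addr0, add0r) // ltnW.
  have [->|j3] := eqVneq j x3.
    by rewrite !ord_neq // !(addr0, add0r).
  have [_|j4] := eqVneq j x4.
    by rewrite !add0r.
  by rewrite !addr0 mulr0.
have q1 : 0 < d 1 x1 by rewrite dv eqxx mul1r.
have q3 : 0 < d 1 x3 by rewrite dv e31 e32 eqxx mul1r.
have q13 : forall j, j != x1 -> j != x3 -> d 1 j <= 0.
  move=> j j1 j3; rewrite dv (negbTE j1) (negbTE j3) mul1r.
  case: ifP => _; first exact: ltW.
  case: ifP => _; first exact: ltW.
  by [].
have q2 : 0 < d (-1) x2 by rewrite dv e21 eqxx mulN1r oppr_gt0.
have q4 : 0 < d (-1) x4 by rewrite dv e41 e42 e43 eqxx mulN1r oppr_gt0.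
have q24 : forall j, j != x2 -> j != x4 -> d (-1) j <= 0.
  move=> j j2 j4; rewrite dv (negbTE j2) (negbTE j4) mulN1r oppr_le0.
  case: ifP => _; first exact: ltW.
  case: ifP => _; first exact: ltW.
  by [].
have sup : forall e j, d e j != 0 -> [|| j == x1, j == x2, j == x3 | j == x4].
  move=> e j; rewrite dv.
  by case: (j == x1); case: (j == x2); case: (j == x3); case: (j == x4); rewrite // mulr0 eqxx.
split.
- have [l' [h1 h2 h3 h4]] := transfer hl (dA 1) (d0 1) (d1 1) (d2 1) q1 q3 q13.
  exists l'; split=> // j /h4 /orP[->//|/sup ->]; by rewrite orbT.
- have [l' [h1 h2 h3 h4]] := transfer hl (dA (-1)) (d0 (-1)) (d1 (-1)) (d2 (-1)) q2 q4 q24.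
  exists l'; split=> // j /h4 /orP[->//|/sup ->]; by rewrite orbT.
Qed.


Definition Nset (a b : 'I_n) (l : 'I_n -> R) :=
  [set j | (l j != 0) && (j \notin [set a; b])].

Lemma convw_in (A : {set 'I_n}) (l : 'I_n -> R) j : convw A l -> l j != 0 -> j \in A.
Proof. by move=> [_ hA _] lj; apply: contraR lj => /hA ->. Qed.

Lemma split_step (A : {set 'I_n}) (l : 'I_n -> R) (a b x y : 'I_n) : (a < b)%N -> a \in A -> b \in A ->
  convw A l -> l x != 0 -> (a < x < b)%N -> l y != 0 -> ((y < a) || (b < y))%N ->
  exists l', [/\ convw A l', pt l' = pt l & Nset a b l' \proper Nset a b l].
Proof.
move=> ab aA bA hl lx hx ly hy.
have xA := convw_in hl lx; have yA := convw_in hl ly.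
have xab : x \notin [set a; b].
  rewrite !inE negb_or; apply/andP; split; apply/eqP => E; rewrite E in hx; lia.
have yab : y \notin [set a; b].
  rewrite !inE negb_or; apply/andP; split; apply/eqP => E; rewrite E in hy; lia.
have fin : forall l' : 'I_n -> R,
   (forall j, l' j != 0 -> [|| l j != 0, j == y, j == a, j == x | j == b]) ->
   (l' x == 0) || (l' y == 0) -> Nset a b l' \proper Nset a b l.
  move=> l' hs hz; apply/properP; split.
    apply/subsetP => j; rewrite !inE => /andP[/hs h jab]; rewrite jab andbT.
    move: jab; rewrite negb_or => /andP[ja jb].
    case/orP: h => [//|/orP[/eqP->//|/orP[/eqP E|/orP[/eqP->//|/eqP E]]]].
    - by rewrite E eqxx in ja.
    - by rewrite E eqxx in jb.
  case/orP: hz => /eqP hz.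
  - by exists x; rewrite !inE ?hz ?eqxx //= lx; move: xab; rewrite !inE.
  - by exists y; rewrite !inE ?hz ?eqxx //= ly; move: yab; rewrite !inE.
case/orP: hy => hy.
- have i1 : (y < a)%N by [].
  have i2 : (a < x)%N by lia.
  have i3 : (x < b)%N by lia.
  have [[l' [h1 h2 h3 h4]] _] := dep4 i1 i2 i3 yA aA xA bA hl.
  exists l'; split=> //; apply: fin; last by rewrite orbC.
  move=> j /h4.
  by case/orP=> [->|/orP[->|/orP[->|/orP[->|->]]]]; rewrite ?orbT.
- have i1 : (a < x)%N by lia.
  have i2 : (x < b)%N by lia.
  have i3 : (b < y)%N by [].
  have [_ [l' [h1 h2 h3 h4]]] := dep4 i1 i2 i3 aA xA bA yA hl.
  exists l'; split=> //; apply: fin => // j /h4.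
  by case/orP=> [->|/orP[->|/orP[->|/orP[->|->]]]]; rewrite ?orbT.
Qed.


Lemma split_chord (A : {set 'I_n}) (l : 'I_n -> R) (a b : 'I_n) :
  (a < b)%N -> a \in A -> b \in A -> convw A l ->
  exists l', [/\ convw A l', pt l' = pt l &
    (forall j, l' j != 0 -> (a <= j <= b)%N) \/
    (forall j, l' j != 0 -> (j <= a)%N || (b <= j)%N)].
Proof.
move=> ab aA bA.
suff H : forall N (l : 'I_n -> R), (#|Nset a b l| <= N)%N -> convw A l ->
    exists l', [/\ convw A l', pt l' = pt l &
    (forall j, l' j != 0 -> (a <= j <= b)%N) \/
    (forall j, l' j != 0 -> (j <= a)%N || (b <= j)%N)].
  by move=> hl; apply: (H _ l (leqnn _)).
elim=> [|N IH] {}l hN hl.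
all: case E1: [exists x, (l x != 0) && (a < x < b)%N]; last first.
all: try by exists l; split=> //; right => j lj; move/negbT: E1;
       rewrite negb_exists => /forallP /(_ j); rewrite lj /=; lia.
all: case E2: [exists y, (l y != 0) && ((y < a) || (b < y))%N]; last first.
all: try by exists l; split=> //; left => j lj; move/negbT: E2;
       rewrite negb_exists => /forallP /(_ j); rewrite lj /=; lia.
all: case/existsP: E1 => x /andP[lx hx]; case/existsP: E2 => y /andP[ly hy].
- have : x \in Nset a b l.
    rewrite !inE lx /= negb_or; apply/andP; split; apply/eqP => E; rewrite E in hx; lia.
  move=> xN; have : (0 < #|Nset a b l|)%N by apply/card_gt0P; exists x.
  lia.
- have [l' [h1 h2 h3]] := split_step ab aA bA hl lx hx ly hy.
  have hc : (#|Nset a b l'| <= N)%N by move/proper_card: h3; lia.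
  have [l'' [k1 k2 k3]] := IH l' hc h1.
  by exists l''; split=> //; rewrite k2.
Qed.


Definition cubr (r : {set 'I_n}) (X : R) := \prod_(j in r) (X - t j).

Definition UF (S : {set 'I_n}) : {set {set 'I_n}} :=
  [set r : {set 'I_n} | [&& r \subset S, #|r| == 3%N &
     [forall k, ((k \in S) && (k \notin r)) ==> (cubr r (t k) < 0)]]].

Lemma ord_ltP (i j : 'I_n) : (i < j)%N -> i != j.
Proof. by move=> h; rewrite ord_neq. Qed.

Lemma card3 (x y z : 'I_n) : (x < y)%N -> (y < z)%N -> #|[set x; y; z]| = 3%N.
Proof.
move=> xy yz; rewrite -setUA cardsU1 cards2 !inE.
rewrite (ord_neq xy) (ord_neq (ltn_trans xy yz)) (negbTE (ord_ltP yz)) /=.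
by [].
Qed.

Lemma card3E (r : {set 'I_n}) : #|r| = 3%N ->
  exists x y z : 'I_n, [/\ (x < y)%N, (y < z)%N & r = [set x; y; z]].
Proof.
move=> hr.
have : (0 < #|r|)%N by rewrite hr.
case/card_gt0P => x0 x0r.
have : #|r :\ x0| == 2%N by rewrite (cardsD1 x0 r) x0r in hr; rewrite -eqSS -hr.
case/cards2P => y0 [z0 [yz0 E]].
have rE : r = [set x0; y0; z0].
  by rewrite -setUA -E setD1K.
have x0y0 : x0 != y0 by apply/eqP => e; move: (setD11 x0 r); rewrite E -e !inE eqxx.
have x0z0 : x0 != z0 by apply/eqP => e; move: (setD11 x0 r); rewrite E -e !inE eqxx orbT.
have neq : forall a b : 'I_n, a != b -> (a < b)%N \/ (b < a)%N.
  move=> a b ab; case: (ltngtP a b) => h; [by left|by right|].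
  by move: ab; rewrite (val_inj h) eqxx.
case: (neq _ _ x0y0) => h1; case: (neq _ _ x0z0) => h2; case: (neq _ _ yz0) => h3.
- exists x0, y0, z0; split=> //; rewrite rE; apply/setP => j; rewrite !inE; by case: (j == x0); case: (j == y0); case: (j == z0).
- exists x0, z0, y0; split=> //; rewrite rE; apply/setP => j; rewrite !inE; by case: (j == x0); case: (j == y0); case: (j == z0).
- lia.
- exists z0, x0, y0; split=> //; rewrite rE; apply/setP => j; rewrite !inE; by case: (j == x0); case: (j == y0); case: (j == z0).
- exists y0, x0, z0; split=> //; rewrite rE; apply/setP => j; rewrite !inE; by case: (j == x0); case: (j == y0); case: (j == z0).
- lia.
- exists y0, z0, x0; split=> //; rewrite rE; apply/setP => j; rewrite !inE; by case: (j == x0); case: (j == y0); case: (j == z0).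
- exists z0, y0, x0; split=> //; rewrite rE; apply/setP => j; rewrite !inE; by case: (j == x0); case: (j == y0); case: (j == z0).
Qed.

Lemma cubr3 (x y z : 'I_n) X : (x < y)%N -> (y < z)%N ->
  cubr [set x; y; z] X = (X - t x) * (X - t y) * (X - t z).
Proof.
move=> xy yz; rewrite /cubr -setUA big_setU1 /=; last first.
  by rewrite !inE (ord_neq xy) (ord_neq (ltn_trans xy yz)).
rewrite big_setU1 /= ?big_set1 ?mulrA //.
by rewrite !inE (ord_neq yz).
Qed.

Lemma cubr_in (r : {set 'I_n}) k : k \in r -> cubr r (t k) = 0.
Proof. by move=> kr; rewrite /cubr (bigD1 k) //= subrr mul0r. Qed.

Lemma neg3 (a b c : R) : a < 0 -> b < 0 -> c < 0 -> a * b * c < 0.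
Proof. move=> ha hb hc; have : 0 < a * b by nra. nra. Qed.
Lemma ppn3 (a b c : R) : 0 < a -> 0 < b -> c < 0 -> a * b * c < 0.
Proof. move=> ha hb hc; have : 0 < a * b by nra. nra. Qed.
Lemma pnn3 (a b c : R) : 0 < a -> b < 0 -> c < 0 -> 0 < a * b * c.
Proof. move=> ha hb hc; have : a * b < 0 by nra. nra. Qed.
Lemma ppp3 (a b c : R) : 0 < a -> 0 < b -> 0 < c -> 0 < a * b * c.
Proof. move=> ha hb hc; have : 0 < a * b by nra. nra. Qed.

Lemma tsub_gt0 (i j : 'I_n) : (j < i)%N -> 0 < t i - t j.
Proof. by move=> h; rewrite subr_gt0 ht. Qed.
Lemma tsub_lt0 (i j : 'I_n) : (i < j)%N -> t i - t j < 0.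
Proof. by move=> h; rewrite subr_lt0 ht. Qed.

Lemma cub_neg (x y z k : 'I_n) : (x < y)%N -> (y < z)%N ->
  ((k < x)%N || (y < k < z)%N) -> cubr [set x; y; z] (t k) < 0.
Proof.
move=> xy yz /orP[h|/andP[h1 h2]]; rewrite cubr3 //.
- apply: neg3; apply: tsub_lt0; lia.
- apply: ppn3; apply: tsub_gt0 || apply: tsub_lt0; lia.
Qed.

Lemma cub_pos (x y z k : 'I_n) : (x < y)%N -> (y < z)%N ->
  ((x < k < y)%N || (z < k)%N) -> 0 < cubr [set x; y; z] (t k).
Proof.
move=> xy yz /orP[/andP[h1 h2]|h]; rewrite cubr3 //.
- apply: pnn3; apply: tsub_gt0 || apply: tsub_lt0; lia.
- apply: ppp3; apply: tsub_gt0; lia.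
Qed.

Lemma sum_supp0 (r : {set 'I_n}) (m : 'I_n -> R) (f : 'I_n -> R) :
  convw r m -> (forall k, k \in r -> f k = 0) -> \sum_k m k * f k = 0.
Proof.
move=> [_ mr _] hf; apply: big1 => k _.
by case kr: (k \in r); [rewrite hf ?mulr0 | rewrite mr ?kr ?mul0r].
Qed.

Lemma cubr_same (r : {set 'I_n}) (l m : 'I_n -> R) : #|r| = 3%N ->
  \sum_i l i = \sum_i m i -> pt l = pt m ->
  \sum_i l i * cubr r (t i) - \sum_i m i * cubr r (t i) =
  \sum_i l i * t i ^+ 3 - \sum_i m i * t i ^+ 3.
Proof.
move=> /card3E [x [y [z [xy yz ->]]]] h1 h2.
apply: (cub_same (a := - (t x * t y * t z)) (b := t x * t y + t y * t z + t z * t x)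
   (c := - (t x + t y + t z))) => // X.
rewrite cubr3 //; ring.
Qed.

Lemma height_cub (u r : {set 'I_n}) (l m : 'I_n -> R) : #|r| = 3%N ->
  convw u l -> convw r m -> pt l = pt m ->
  \sum_i m i * t i ^+ 3 - \sum_i l i * t i ^+ 3 = - \sum_i l i * cubr r (t i).
Proof.
move=> hr hl hm hp.
have e : \sum_i l i = \sum_i m i by case: hl => _ _ ->; case: hm => _ _ ->.
have := cubr_same hr e hp.
rewrite (sum_supp0 hm (@cubr_in r)) subr0 => ->; ring.
Qed.


Lemma exists_min (S : {set 'I_n}) x0 : x0 \in S ->
  exists2 a, a \in S & forall k, k \in S -> (a <= k)%N.
Proof.
move=> x0S; case: (arg_minnP (fun i : 'I_n => (i : nat)) x0S) => a aS amin.
by exists a.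
Qed.

Lemma exists_max (S : {set 'I_n}) x0 : x0 \in S ->
  exists2 a, a \in S & forall k, k \in S -> (k <= a)%N.
Proof.
move=> x0S; case: (arg_maxnP (fun i : 'I_n => (i : nat)) x0S) => a aS amax.
by exists a.
Qed.

Lemma small2 (A : {set 'I_n}) x y : x != y -> x \in A -> y \in A -> (#|A| <= 2)%N ->
  A \subset [set x; y].
Proof.
move=> xy xA yA hA.
have : [set x; y] == A.
  rewrite eqEcard; apply/andP; split.
    by apply/subsetP => j; rewrite !inE => /orP[] /eqP ->.
  by rewrite cards2 xy.
by move/eqP => <-.
Qed.

Lemma convw_restrict (A : {set 'I_n}) (l : 'I_n -> R) (P : pred 'I_n) :
  convw A l -> (forall j, l j != 0 -> P j) -> convw (A :&: [set j | P j]) l.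
Proof.
move=> hl hP; case: (hl) => h0 hA h1; split=> // j; rewrite !inE negb_and => /orP[/hA //|].
by move=> Pj; apply/eqP; apply: contraR Pj => /hP ->.
Qed.

Lemma in_S3 (S : {set 'I_n}) (a b d : 'I_n) : a \in S -> b \in S -> d \in S ->
  [set a; b; d] \subset S.
Proof. by move=> aS bS dS; apply/subsetP => j; rewrite !inE => /orP[/orP[]|] /eqP ->. Qed.

Lemma ar1 (k a b d : nat) : (b <= k)%N -> (k <= d)%N -> k != b -> k != d ->
  (k < a)%N || (b < k < d)%N.
Proof. lia. Qed.

Lemma ord_neqn (i j : 'I_n) : i != j -> (i : nat) != j.
Proof. by apply: contra => /eqP E; apply/eqP/val_inj. Qed.

Lemma UF_cover N (S : {set 'I_n}) (l : 'I_n -> R) : (#|S| <= N)%N -> (3 <= #|S|)%N ->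
  convw S l -> exists2 r, r \in UF S & in_conv t r (pt l).
Proof.
elim: N S l => [|N IH] S l hN h3 hl; first lia.
have : (0 < #|S|)%N by lia.
case/card_gt0P => x0 x0S.
have [a aS amin] := exists_min x0S.
have : (0 < #|S :\ a|)%N by move: h3; rewrite (cardsD1 a S) aS; lia.
case/card_gt0P => y0 y0S.
have [b bSa bmin] := exists_min y0S.
have bS : b \in S by move: bSa; rewrite !inE => /andP[].
have ba : b != a by move: bSa; rewrite !inE => /andP[].
have ab : (a < b)%N.
  have := amin _ bS; rewrite leq_eqVlt => /orP[/eqP E|//].
  by move: ba; rewrite (val_inj E) eqxx.
have bmin' : forall k, k \in S -> k != a -> (b <= k)%N.
  by move=> k kS ka; apply: bmin; rewrite !inE ka.
have [d dS dmax] := exists_max x0S.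
have : (0 < #|S :\ a :\ b|)%N.
  by move: h3; rewrite (cardsD1 a S) aS (cardsD1 b (S :\ a)) bSa; lia.
case/card_gt0P => c; rewrite !inE => /andP[cb /andP[ca cS]].
have bc : (b < c)%N.
  have := bmin' _ cS ca; rewrite leq_eqVlt => /orP[/eqP E|//].
  by move: cb; rewrite (val_inj E) eqxx.
have bd : (b < d)%N by have := dmax _ cS; lia.
have abdUF : [set a; b; d] \in UF S.
  rewrite inE in_S3 // card3 //=.
  apply/forallP => k; apply/implyP; rewrite !inE => /andP[kS].
  rewrite negb_or => /andP[/norP[ka kb] kd].
  apply: cub_neg => //.
  by apply: ar1; [apply: bmin' | apply: dmax | apply: ord_neqn ..].
have [l' [h1 h2 [hI|hO]]] := split_chord bd bS dS hl.
- have hl' := convw_restrict h1 hI.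
  set S' := S :&: _ in hl'.
  have bS' : b \in S' by rewrite !inE bS leqnn /= ltnW.
  have dS' : d \in S' by rewrite !inE dS leqnn /= ltnW.
  have aS' : a \notin S' by rewrite !inE leqNgt ab andbF.
  have S'S : S' \subset S by apply/subsetP => j; rewrite !inE => /andP[].
  case: (leqP 3 #|S'|) => hS'.
  + have ltS : (#|S'| < #|S|)%N.
      apply: proper_card; apply/properP; split => //; by exists a.
    have hN' : (#|S'| <= N)%N by rewrite -ltnS (leq_trans ltS hN).
    have [r rUF rc] := IH S' l' hN' hS' hl'.
    exists r; last by rewrite -h2.
    move: rUF; rewrite !inE => /and3P[rS' r3 /forallP hr].
    rewrite (subset_trans rS' S'S) r3 /=.
    apply/forallP => k; apply/implyP => /andP[kS kr].
    case kS': (k \in S'); first by have := hr k; rewrite kS' kr.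
    have ka : k = a.
      apply/eqP; apply/negPn/negP => ka.
      move: kS'; rewrite !inE kS /= (bmin' _ kS ka) /=.
      by rewrite (dmax _ kS).
    subst k.
    have [x [y [z [xy yz rE]]]] := card3E (eqP r3).
    rewrite rE in rS' *.
    have xS' : x \in S' by apply: (subsetP rS'); rewrite !inE eqxx.
    move: xS'; rewrite !inE => /andP[_ /andP[bx _]].
    by apply: cub_neg => //; rewrite (leq_trans ab bx).
  + exists [set a; b; d] => //.
    exists l'; split; last by rewrite -h2.
    apply: convw_sub hl'.
    apply: subset_trans (small2 _ bS' dS' _) _.
    * by apply: ord_ltP.
    * by [].
    * by apply/subsetP => j; rewrite !inE => /orP[] ->; rewrite ?orbT.
- exists [set a; b; d] => //.
  exists l'; split; last by rewrite -h2.
  apply: convw_sub (convw_restrict h1 hO).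
  apply/subsetP => j; rewrite !inE => /andP[jS hj].
  case: (eqVneq j a) => [_|ja]; first by [].
  have := bmin' _ jS ja; have := dmax _ jS.
  case/orP: hj => hj hd hb.
  + have -> : j = b by apply: val_inj; apply/eqP; rewrite eqn_leq hj hb.
    by rewrite eqxx ?orbT.
  + have -> : j = d by apply: val_inj; apply/eqP; rewrite eqn_leq hj hd.
    by rewrite eqxx ?orbT.
Qed.


Definition Lf (a b : 'I_n) (X : R) := (X - t a) * (X - t b).

Lemma L_same (a b : 'I_n) (l m : 'I_n -> R) : \sum_i l i = \sum_i m i -> pt l = pt m ->
  \sum_i l i * Lf a b (t i) = \sum_i m i * Lf a b (t i).
Proof.
move=> h1 h2.
have E : forall (w : 'I_n -> R), \sum_i w i * Lf a b (t i) =
   \sum_i w i * (t a * t b + (- (t a + t b)) * t i + 1 * t i ^+ 2).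
  by move=> w; apply: eq_bigr => i _; rewrite /Lf; congr (_ * _); ring.
by rewrite !E (quad_same _ _ _ h1 h2).
Qed.

Lemma t_le (i j : 'I_n) : (i <= j)%N -> t i <= t j.
Proof.
rewrite leq_eqVlt => /orP[/eqP E|h]; first by rewrite (val_inj E).
by apply: ltW; apply: ht.
Qed.

Lemma L_neg (a b k : 'I_n) : (a < k < b)%N -> Lf a b (t k) < 0.
Proof.
case/andP=> h1 h2; rewrite /Lf; have := tsub_gt0 h1; have := tsub_lt0 h2; nra.
Qed.

Lemma L_pos (a b k : 'I_n) : (a < b)%N -> ((k < a) || (b < k))%N -> 0 < Lf a b (t k).
Proof.
move=> ab /orP[h|h]; rewrite /Lf.
- have h1 : (k < b)%N by lia.
  have := tsub_lt0 h; have := tsub_lt0 h1; nra.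
- have h1 : (a < k)%N by lia.
  have := tsub_gt0 h; have := tsub_gt0 h1; nra.
Qed.

Lemma L_a (a b : 'I_n) : Lf a b (t a) = 0.
Proof. by rewrite /Lf subrr mul0r. Qed.
Lemma L_b (a b : 'I_n) : Lf a b (t b) = 0.
Proof. by rewrite /Lf subrr mulr0. Qed.

Lemma L_zero (a b k : 'I_n) : Lf a b (t k) = 0 -> k \in [set a; b].
Proof.
rewrite /Lf => /eqP; rewrite mulf_eq0 !subr_eq0 !inE => /orP[] E.
- case: (eqVneq k a) => // ka; by rewrite (negbTE (t_inj ka)) in E.
- case: (eqVneq k b) => [_|kb]; first by rewrite orbT.
  by rewrite (negbTE (t_inj kb)) in E.
Qed.

Lemma ar2 (a k b : nat) : (a <= k)%N -> (k <= b)%N -> k != a -> k != b -> (a < k < b)%N.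
Proof. lia. Qed.
Lemma ar3 (a k b : nat) : ~~ (a <= k <= b)%N -> ((k < a) || (b < k))%N.
Proof. lia. Qed.
Lemma ar4 (a k b : nat) : ~~ ((k <= a) || (b <= k))%N -> (a < k < b)%N.
Proof. lia. Qed.
Lemma ar5 (a k b : nat) : ((k <= a) || (b <= k))%N -> k != a -> k != b -> ((k < a) || (b < k))%N.
Proof. lia. Qed.

Lemma I_L (a b k : 'I_n) : (a < b)%N -> (a <= k <= b)%N = (Lf a b (t k) <= 0).
Proof.
move=> ab; apply/idP/idP => [/andP[h1 h2]|hL].
- case: (eqVneq k a) => [->|ka]; first by rewrite L_a.
  case: (eqVneq k b) => [->|kb]; first by rewrite L_b.
  by apply: ltW; apply: L_neg; apply: ar2 => //; apply: ord_neqn.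
- apply/negPn/negP => /ar3 h.
  by move: hL; rewrite leNgt L_pos.
Qed.

Lemma O_L (a b k : 'I_n) : (a < b)%N -> ((k <= a) || (b <= k))%N = (- Lf a b (t k) <= 0).
Proof.
move=> ab; rewrite oppr_le0; apply/idP/idP => [h|hL].
- case: (eqVneq k a) => [->|ka]; first by rewrite L_a.
  case: (eqVneq k b) => [->|kb]; first by rewrite L_b.
  by apply: ltW; apply: L_pos => //; apply: ar5 => //; apply: ord_neqn.
- apply/negPn/negP => /ar4 h.
  by move: hL; rewrite leNgt L_neg.
Qed.

Lemma sum_ge0_eq0 (F : 'I_n -> R) : (forall i, 0 <= F i) -> \sum_i F i = 0 -> forall i, F i = 0.
Proof. by move=> h1 h2 i; apply: (psumr_eq0P (P := xpredT)) => // j _; apply: h1. Qed.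

Lemma convw_supp {A B : {set 'I_n}} {l : 'I_n -> R} :
  convw A l -> (forall j, l j != 0 -> j \in B) -> convw B l.
Proof.
move=> [h0 hA h1] hB; split=> // j jB; apply/eqP; apply: contraR jB => /hB.
by move=> ->.
Qed.

Lemma onchord (A : {set 'I_n}) (q : 'I_n -> R) (a b : 'I_n) : (a < b)%N ->
  a \in A -> b \in A -> convw A q -> \sum_i q i * Lf a b (t i) = 0 ->
  exists q', convw [set a; b] q' /\ pt q' = pt q.
Proof.
move=> ab aA bA hq h0.
have [q1 [h1 h2 h3]] := split_chord ab aA bA hq.
have e : \sum_i q1 i = \sum_i q i by case: h1 => _ _ ->; case: hq => _ _ ->.
have z : \sum_i q1 i * Lf a b (t i) = 0 by rewrite (L_same a b e h2).
have q10 : forall i, 0 <= q1 i by case: h1.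
exists q1; split => //; refine (convw_supp h1 _); move=> j qj.
case: h3 => hs.
- have F : forall i, 0 <= - (q1 i * Lf a b (t i)).
    move=> i; rewrite oppr_ge0; case: (eqVneq (q1 i) 0) => [->|qi]; first by rewrite mul0r.
    by apply: mulr_ge0_le0 => //; rewrite -I_L // hs.
  have := sum_ge0_eq0 F; rewrite sumrN z oppr0 => /(_ erefl j) /eqP.
  by rewrite oppr_eq0 mulf_eq0 (negbTE qj) /= => /eqP /L_zero.
- have F : forall i, 0 <= q1 i * Lf a b (t i).
    move=> i; case: (eqVneq (q1 i) 0) => [->|qi]; first by rewrite mul0r.
    by apply: mulr_ge0 => //; rewrite -oppr_le0 -O_L // hs.
  have := sum_ge0_eq0 F z j => /eqP.
  by rewrite mulf_eq0 (negbTE qj) /= => /eqP /L_zero.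
Qed.


Lemma sum_le0_eq0 (F : 'I_n -> R) : (forall i, F i <= 0) -> \sum_i F i = 0 -> forall i, F i = 0.
Proof.
move=> h1 h2 i; apply/eqP; rewrite -oppr_eq0; apply/eqP.
apply: (@sum_ge0_eq0 (fun i => - F i)) => [j|]; first by rewrite oppr_ge0.
by rewrite sumrN h2 oppr0.
Qed.

Lemma sum_le0 (F : 'I_n -> R) : (forall i, F i <= 0) -> \sum_i F i <= 0.
Proof.
move=> h; rewrite -oppr_ge0 -sumrN; apply: sumr_ge0 => i _; rewrite oppr_ge0; exact: h.
Qed.

Lemma UF_card (S r : {set 'I_n}) : r \in UF S -> #|r| = 3%N.
Proof. by rewrite inE => /and3P[_ /eqP -> _]. Qed.

Lemma UF_sub (S r : {set 'I_n}) : r \in UF S -> r \subset S.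
Proof. by rewrite inE => /and3P[]. Qed.

Lemma UF_le0 (S r : {set 'I_n}) k : r \in UF S -> k \in S -> cubr r (t k) <= 0.
Proof.
rewrite inE => /and3P[_ _ /forallP h] kS.
case kr: (k \in r); first by rewrite cubr_in.
by apply: ltW; move: (h k); rewrite kS kr.
Qed.

Lemma UF_lt0 (S r : {set 'I_n}) k : r \in UF S -> k \in S -> k \notin r -> cubr r (t k) < 0.
Proof.
rewrite inE => /and3P[_ _ /forallP h] kS kr.
by move: (h k); rewrite kS kr.
Qed.

Lemma UF_disj (S r r' : {set 'I_n}) p : r \in UF S -> r' \in UF S ->
  in_conv t r p -> in_conv t r' p -> in_conv t (r :&: r') p.
Proof.
move=> rU r'U [l [hl ->]] [m [hm E]].
have hp : pt l = pt m by [].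
have e1 := height_cub (UF_card r'U) hl hm hp.
have e2 := height_cub (UF_card rU) hm hl (esym hp).
have F1 : forall i, l i * cubr r' (t i) <= 0.
  move=> i; case: (hl) => l0 lr _; case ir: (i \in r); last by rewrite lr ?ir // mul0r.
  by rewrite mulr_ge0_le0 // (UF_le0 r'U) // (subsetP (UF_sub rU)).
have F2 : forall i, m i * cubr r (t i) <= 0.
  move=> i; case: (hm) => m0 mr _; case ir: (i \in r'); last by rewrite mr ?ir // mul0r.
  by rewrite mulr_ge0_le0 // (UF_le0 rU) // (subsetP (UF_sub r'U)).
have S1 := sum_le0 F1; have S2 := sum_le0 F2.
have Z1 : \sum_i l i * cubr r' (t i) = 0.
  apply/eqP; rewrite eq_le S1 /=.
  have : \sum_i l i * cubr r' (t i) + \sum_i m i * cubr r (t i) = 0.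
    have : - \sum_i l i * cubr r' (t i) + - \sum_i m i * cubr r (t i) = 0.
      by rewrite -e1 -e2; ring.
    by move/eqP; rewrite -opprD oppr_eq0 => /eqP.
  move=> H; lra.
have Z := sum_le0_eq0 F1 Z1.
exists l; split=> //.
refine (convw_supp hl _) => i li.
case: (hl) => _ lr _.
have ir : i \in r by apply/negPn/negP => /lr /eqP; rewrite (negbTE li).
rewrite inE ir /=; apply/negPn/negP => ir'.
have := Z i; move/eqP; rewrite mulf_eq0 (negbTE li) /=.
by rewrite lt_eqF // (UF_lt0 r'U) // (subsetP (UF_sub rU)).
Qed.

Lemma chord_disj (a b : 'I_n) (r r' : {set 'I_n}) p : (a < b)%N ->
  (forall k, k \in r -> (a <= k <= b)%N) -> (forall k, k \in r' -> (k <= a) || (b <= k))%N ->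
  in_conv t r p -> in_conv t r' p -> in_conv t (r :&: r') p.
Proof.
move=> ab hr hr' [l [hl ->]] [m [hm E]].
have hp : pt l = pt m by [].
have e : \sum_i l i = \sum_i m i by case: hl => _ _ ->; case: hm => _ _ ->.
have LE := L_same a b e hp.
have F1 : forall i, l i * Lf a b (t i) <= 0.
  move=> i; case: (hl) => l0 lr _; case ir: (i \in r); last by rewrite lr ?ir // mul0r.
  by rewrite mulr_ge0_le0 // -I_L // hr.
have F2 : forall i, 0 <= m i * Lf a b (t i).
  move=> i; case: (hm) => m0 mr _; case ir: (i \in r'); last by rewrite mr ?ir // mul0r.
  by rewrite mulr_ge0 // -oppr_le0 -O_L // hr'.
have S1 := sum_le0 F1.
have S2 : 0 <= \sum_i m i * Lf a b (t i) by apply: sumr_ge0 => i _.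
have Z1 : \sum_i l i * Lf a b (t i) = 0 by apply/eqP; rewrite eq_le S1 LE S2.
have Z2 : \sum_i m i * Lf a b (t i) = 0 by rewrite -LE.
have sup : forall (w : 'I_n -> R) A, convw A w -> \sum_i w i * Lf a b (t i) = 0 ->
   (forall i, w i * Lf a b (t i) = 0) -> convw (A :&: [set a; b]) w.
  move=> w A hw _ Zw; refine (convw_supp hw _) => i wi.
  case: (hw) => _ wA _.
  have iA : i \in A by apply/negPn/negP => /wA /eqP; rewrite (negbTE wi).
  rewrite inE iA /=; apply: L_zero.
  by have := Zw i; move/eqP; rewrite mulf_eq0 (negbTE wi) /= => /eqP.
have hl' := sup _ _ hl Z1 (sum_le0_eq0 F1 Z1).
have hm' := sup _ _ hm Z2 (sum_ge0_eq0 F2 Z2).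
have c2 : (#|[set a; b]| <= 3)%N by rewrite cards2; case: (a != b).
have U' := uniq_w c2 (convw_sub (subsetIr _ _) hl') (convw_sub (subsetIr _ _) hm') hp.
exists l; split=> //.
refine (convw_supp hl' _) => i li.
have := (convw_in hl' li); rewrite !inE => /andP[-> _] /=.
have := U' i => mi; rewrite mi in li.
by have := (convw_in hm' li); rewrite !inE => /andP[].
Qed.


Lemma comb_sum (g h f : 'I_n -> R) (x y D : R) :
  \sum_i ((x * g i - y * h i) / D) * f i =
  (x * \sum_i g i * f i - y * \sum_i h i * f i) / D.
Proof.
transitivity (\sum_i ((x / D) * (g i * f i) - (y / D) * (h i * f i))).
  by apply: eq_bigr => i _; ring.
by rewrite sumrB -!mulr_sumr; ring.
Qed.

Lemma sum1E (w : 'I_n -> R) : \sum_i w i = \sum_i w i * (fun=> 1) i.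
Proof. by apply: eq_bigr => i _; rewrite mulr1. Qed.

Lemma UF_height (S u r : {set 'I_n}) (a b : 'I_n) (e : R) :
  (a < b)%N -> a \in S -> b \in S -> (e = 1 \/ e = -1) ->
  (forall k, (k \in S) = (e * Lf a b (t k) <= 0)) ->
  (forall q m', convw u q -> convw [set a; b] m' -> pt q = pt m' ->
      \sum_i q i * t i ^+ 3 <= \sum_i m' i * t i ^+ 3) ->
  r \in UF S ->
  forall l m, convw u l -> convw r m -> pt l = pt m ->
    \sum_i l i * t i ^+ 3 <= \sum_i m i * t i ^+ 3.
Proof.
move=> ab aS bS he hS hs rU l m hl hm hp.
have H := height_cub (UF_card rU) hl hm hp.
rewrite -subr_ge0 H oppr_ge0 leNgt; apply/negP => Gpos.
set c := fun i => cubr r (t i).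
set psi := fun i => e * Lf a b (t i).
case: (hl) => l0 lu l1.
pose lI i := if psi i <= 0 then l i else 0.
pose lO i := if psi i <= 0 then 0 else l i.
have lIO : forall f : 'I_n -> R, \sum_i l i * f i = \sum_i lI i * f i + \sum_i lO i * f i.
  move=> f; rewrite -big_split /=; apply: eq_bigr => i _; rewrite /lI /lO.
  by case: ifP => _; rewrite ?mul0r ?addr0 ?add0r.
set A := \sum_i lI i * (fun=> 1) i.
set mu := \sum_i lO i * (fun=> 1) i.
set PI := \sum_i lI i * psi i.
set PO := \sum_i lO i * psi i.
set GI := \sum_i lI i * c i.
set GO := \sum_i lO i * c i.
have lI0 : forall i, 0 <= lI i by move=> i; rewrite /lI; case: ifP.
have lO0 : forall i, 0 <= lO i by move=> i; rewrite /lO; case: ifP.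
have f1 : A + mu = 1 by rewrite /A /mu -lIO -sum1E.
have A0 : 0 <= A by apply: sumr_ge0 => i _; rewrite mulr1.
have mu0 : 0 <= mu by apply: sumr_ge0 => i _; rewrite mulr1.
have PI0 : PI <= 0.
  apply: sum_le0 => i; rewrite /lI; case: ifP => h; last by rewrite mul0r.
  by rewrite mulr_ge0_le0.
have PO0 : 0 <= PO.
  apply: sumr_ge0 => i _; rewrite /lO; case: ifP => h; first by rewrite mul0r.
  by rewrite mulr_ge0 // ltW // ltNge h.
have GI0 : GI <= 0.
  apply: sum_le0 => i; rewrite /lI; case: ifP => h; last by rewrite mul0r.
  by rewrite mulr_ge0_le0 // (UF_le0 rU) // hS.
have e0 : e != 0 by case: he => ->; rewrite ?oppr_eq0 oner_eq0.
have es : forall w : 'I_n -> R, \sum_i w i * psi i = e * \sum_i w i * Lf a b (t i).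
  by move=> w; rewrite mulr_sumr; apply: eq_bigr => i _; rewrite /psi; ring.
have f2 : PI + PO <= 0.
  rewrite /PI /PO -lIO es.
  have ee : \sum_i l i = \sum_i m i by rewrite l1; case: hm.
  rewrite (L_same a b ee hp) -es.
  apply: sum_le0 => i; case: (hm) => m0 mr _.
  case ir: (i \in r); last by rewrite mr ?ir // mul0r.
  by rewrite mulr_ge0_le0 // -hS (subsetP (UF_sub rU)).
have f5 : \sum_i l i * c i = GI + GO by rewrite lIO.
have PO_pos : 0 < PO.
  rewrite lt_def PO0 andbT; apply/eqP => P0.
  have Z : forall i, lO i * psi i = 0.
    apply: sum_ge0_eq0 => // i; rewrite /lO; case: ifP => h; first by rewrite mul0r.
    by rewrite mulr_ge0 // ltW // ltNge h.
  have GO0 : GO = 0.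
    apply: big1 => i _; have := Z i; rewrite /lO; case: ifP => h; first by rewrite !mul0r.
    move/eqP; rewrite mulf_eq0 => /orP[/eqP -> |]; first by rewrite mul0r.
    by move/eqP => E; rewrite E lexx in h.
  by move: Gpos; rewrite f5 GO0 addr0 ltNge GI0.
set D := PO * A - PI * mu.
have D_pos : 0 < D.
  have : 0 <= - (PI + PO) * mu by apply: mulr_ge0 => //; rewrite oppr_ge0.
  have : PO * A + PO * mu = PO by rewrite -mulrDr f1 mulr1.
  rewrite /D; lra.
pose q i := (PO * lI i - PI * lO i) / D.
have qE : forall f : 'I_n -> R, \sum_i q i * f i = (PO * \sum_i lI i * f i - PI * \sum_i lO i * f i) / D.
  by move=> f; rewrite comb_sum.
have hqu : convw u q.
  split.
  - move=> i; rewrite /q; apply: divr_ge0; last exact: ltW.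
    rewrite subr_ge0; apply: (@le_trans _ _ 0).
    + by rewrite mulr_le0_ge0.
    + by rewrite mulr_ge0 // ltW.
  - move=> i iu.
    by rewrite /q /lI /lO lu //; case: ifP => _; rewrite !mulr0 subrr mul0r.
  - by rewrite sum1E qE -/A -/mu -/D divff // gt_eqF.
have qpsi : \sum_i q i * Lf a b (t i) = 0.
  have : e * \sum_i q i * Lf a b (t i) = 0.
    by rewrite -es qE -/PI -/PO [PO * PI]mulrC subrr mul0r.
  by move/eqP; rewrite mulf_eq0 (negbTE e0) /= => /eqP.
have qc : 0 < \sum_i q i * c i.
  rewrite qE -/GI -/GO; apply: divr_gt0 => //.
  have GO_pos : 0 < GI + GO by rewrite -f5.
  have h1 : 0 < PO * (GI + GO) by apply: mulr_gt0.
  have h2 : 0 <= (- PI - PO) * GO.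
    apply: mulr_ge0; first lra.
    lra.
  move: h1 h2; rewrite mulrDr mulrBl; lra.
have hq : convw (u :|: [set a; b]) q by apply: convw_sub hqu; apply: subsetUl.
have aU : a \in u :|: [set a; b] by rewrite !inE eqxx !orbT.
have bU : b \in u :|: [set a; b] by rewrite !inE eqxx !orbT.
have [q' [hq' hpq]] := onchord ab aU bU hq qpsi.
have h3 := hs q q' hqu hq' (esym hpq).
have eq1 : \sum_i q i = \sum_i q' i by case: hqu => _ _ ->; case: hq' => _ _ ->.
have E3 := cubr_same (UF_card rU) eq1 (esym hpq).
have Q0 : \sum_i q' i * c i <= 0.
  apply: sum_le0 => i; case: (hq') => q0 qr _.
  case iab: (i \in [set a; b]); last by rewrite qr ?iab // mul0r.
  apply: mulr_ge0_le0 => //; apply: (UF_le0 rU).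
  by move: iab; rewrite !inE => /orP[] /eqP ->.
move: qc E3 h3 Q0; rewrite /c; lra.
Qed.


Lemma HS_of (u s : {set 'I_n}) : (#|u| <= 3)%N -> (#|s| <= 3)%N ->
  (~ overlap t u s \/ below3 t u s) ->
  forall l m, convw u l -> convw s m -> pt l = pt m ->
    \sum_i l i * t i ^+ 3 <= \sum_i m i * t i ^+ 3.
Proof.
move=> hu hs [nov|[_ hb]] l m hl hm hp.
- have : in_conv t (u :&: s) (pt l).
    apply: NNPP => H; apply: nov; split.
      by move=> p hp'; split; apply: in_conv_sub hp'; [apply: subsetIl | apply: subsetIr].
    exists (pt l); split => //; first by exists l.
    by exists m; split => //; rewrite hp.
  case=> w [hw Ew].
  have Ul := uniq_w hu hl (convw_sub (subsetIl _ _) hw) Ew.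
  have Um := uniq_w hs hm (convw_sub (subsetIr _ _) hw) (etrans (esym hp) Ew).
  have -> : \sum_i l i * t i ^+ 3 = \sum_i m i * t i ^+ 3.
    by apply: eq_bigr => i _; rewrite Ul Um.
  exact: lexx.
- apply: (hb (pt l)).
  + by exists l; split.
  + by exists m; split => //; rewrite hp.
Qed.

Definition nov (r r' : {set 'I_n}) :=
  forall p, in_conv t r p -> in_conv t r' p -> in_conv t (r :&: r') p.

Lemma nov_ok (r r' : {set 'I_n}) : nov r r' -> ~ overlap t r r'.
Proof. by move=> h [_ [p [h1 h2 h3]]]; apply: h3; apply: h. Qed.

Lemma nov_sym (r r' : {set 'I_n}) : nov r r' -> nov r' r.
Proof. by move=> h p h1 h2; rewrite setIC; apply: h. Qed.

Definition Iv (a b : 'I_n) := [set k : 'I_n | (a <= k <= b)%N].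
Definition Ov (a b : 'I_n) := [set k : 'I_n | (k <= a)%N || (b <= k)%N].

Lemma sep (x y : 'I_n) (r r' : {set 'I_n}) : (x < y)%N -> r \subset Iv x y -> r' \subset Ov x y ->
  nov r r' /\ nov r' r.
Proof.
move=> xy hr hr'.
have h : nov r r'.
  move=> p; apply: chord_disj xy _ _.
  - by move=> k /(subsetP hr); rewrite inE.
  - by move=> k /(subsetP hr'); rewrite inE.
by split => //; apply: nov_sym.
Qed.

Lemma piece_cover (T : {set {set 'I_n}}) (S A : {set 'I_n}) (x y : 'I_n) (r0 : {set 'I_n}) (l : 'I_n -> R) :
  x != y -> x \in S -> y \in S -> [set x; y] \subset r0 -> r0 \in T -> UF S \subset T ->
  A \subset S -> convw A l -> exists2 r, r \in T & in_conv t r (pt l).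
Proof.
move=> xy xS yS h0 r0T UT AS hl.
have hS := convw_sub AS hl.
case: (leqP 3 #|S|) => h3.
- have [r rU rc] := UF_cover (leqnn _) h3 hS.
  by exists r => //; apply: (subsetP UT).
- exists r0 => //; exists l; split => //.
  apply: convw_sub hS; apply: subset_trans h0; apply: small2 => //.
Qed.

Lemma UF_mem (S r : {set 'I_n}) k : r \in UF S -> k \in r -> k \in S.
Proof. by move=> /UF_sub /subsetP; apply. Qed.


Definition HSP (u s : {set 'I_n}) := forall l m, convw u l -> convw s m -> pt l = pt m ->
    \sum_i l i * t i ^+ 3 <= \sum_i m i * t i ^+ 3.

Lemma UFh_I (a b : 'I_n) (u s r : {set 'I_n}) : (a < b)%N -> [set a; b] \subset s ->
  HSP u s -> r \in UF (Iv a b) -> HSP u r.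
Proof.
move=> ab abs hs rU l m hl hm hp.
have aS : a \in Iv a b by rewrite inE leqnn ltnW.
have bS : b \in Iv a b by rewrite inE leqnn ltnW.
have he : (1 : R) = 1 \/ (1 : R) = -1 by left.
have hS : forall k, (k \in Iv a b) = (1 * Lf a b (t k) <= 0) by move=> k; rewrite inE mul1r I_L.
have hs' : forall q m', convw u q -> convw [set a; b] m' -> pt q = pt m' ->
      \sum_i q i * t i ^+ 3 <= \sum_i m' i * t i ^+ 3.
  by move=> q m' hq hm' hpq; apply: hs hq (convw_sub abs hm') hpq.
exact: (UF_height ab aS bS he hS hs' rU hl hm hp).
Qed.

Lemma UFh_O (a b : 'I_n) (u s r : {set 'I_n}) : (a < b)%N -> [set a; b] \subset s ->
  HSP u s -> r \in UF (Ov a b) -> HSP u r.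
Proof.
move=> ab abs hs rU l m hl hm hp.
have aS : a \in Ov a b by rewrite inE leqnn.
have bS : b \in Ov a b by rewrite inE leqnn orbT.
have he : (-1 : R) = 1 \/ (-1 : R) = -1 by right.
have hS : forall k, (k \in Ov a b) = (-1 * Lf a b (t k) <= 0) by move=> k; rewrite inE mulN1r O_L.
have hs' : forall q m', convw u q -> convw [set a; b] m' -> pt q = pt m' ->
      \sum_i q i * t i ^+ 3 <= \sum_i m' i * t i ^+ 3.
  by move=> q m' hq hm' hpq; apply: hs hq (convw_sub abs hm') hpq.
exact: (UF_height ab aS bS he hS hs' rU hl hm hp).
Qed.

Lemma le3T_of (u : {set 'I_n}) (T : {set {set 'I_n}}) :
  (forall r, r \in T -> HSP u r) -> le3T t u T.
Proof.
move=> h r rT p y z [l [hl Ep ->]] [m [hm Ep' ->]].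
apply: (h r rT l m hl hm).
by move: Ep Ep'; rewrite /pt => <- <-.
Qed.

Lemma ar6 (a b c j : nat) : (a < b)%N -> (b < c)%N -> (a <= j <= c)%N ->
  ((j <= a) || (b <= j))%N -> ((j <= b) || (c <= j))%N -> [|| j == a, j == b | j == c].
Proof. lia. Qed.


Lemma main_tri (a b c : 'I_n) : (a < b)%N -> (b < c)%N ->
  exists T : {set {set 'I_n}},
    [/\ is_triangulation t T, simplex_of [set a; b; c] T &
        forall u : {set 'I_n}, edge_or_triangle u -> u != [set a; b; c] ->
          (~ overlap t u [set a; b; c] \/ below3 t u [set a; b; c]) -> le3T t u T].
Proof.
move=> ab bc; have ac : (a < c)%N by apply: ltn_trans ab bc.
set s := [set a; b; c].
pose T := s |: (UF (Iv a b) :|: UF (Iv b c) :|: UF (Ov a c)).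
have Tmem : forall r, r \in T ->
   [\/ r = s, r \in UF (Iv a b), r \in UF (Iv b c) | r \in UF (Ov a c)].
  move=> r; rewrite in_setU1 !in_setU => /orP[/eqP->|/orP[/orP[h|h]|h]].
  - by constructor 1.
  - by constructor 2.
  - by constructor 3.
  - by constructor 4.
have sT : s \in T by rewrite in_setU1 eqxx.
have abT : UF (Iv a b) \subset T by apply/subsetP => r h; rewrite in_setU1 !in_setU h !orbT.
have bcT : UF (Iv b c) \subset T by apply/subsetP => r h; rewrite in_setU1 !in_setU h !orbT.
have acT : UF (Ov a c) \subset T by apply/subsetP => r h; rewrite in_setU1 !in_setU h !orbT.
have abs : [set a; b] \subset s by apply/subsetP => j; rewrite !inE => /orP[] ->; rewrite ?orbT.
have bcs : [set b; c] \subset s by apply/subsetP => j; rewrite !inE => /orP[] ->; rewrite ?orbT.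
have acs : [set a; c] \subset s by apply/subsetP => j; rewrite !inE => /orP[] ->; rewrite ?orbT.
have nab : a != b by apply: ord_ltP.
have nbc : b != c by apply: ord_ltP.
have nac : a != c by apply: ord_ltP.
have aIab : a \in Iv a b by rewrite inE leqnn ltnW.
have bIab : b \in Iv a b by rewrite inE leqnn ltnW.
have bIbc : b \in Iv b c by rewrite inE leqnn ltnW.
have cIbc : c \in Iv b c by rewrite inE leqnn ltnW.
have aOac : a \in Ov a c by rewrite inE leqnn.
have cOac : c \in Ov a c by rewrite inE leqnn orbT.
exists T; split.
- split.
  + move=> r /Tmem [->|/UF_card|/UF_card|/UF_card] //; exact: card3.
  + move=> p; split; last first.
      by case=> r _ hr; apply: in_conv_sub hr; apply: subsetT.
    case=> l [hl ->].
    change (exists2 r, r \in T & in_conv t r (pt l)).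
    have [l1 [h1 e1 [hI|hO]]] := split_chord ac (in_setT a) (in_setT c) hl.
    * have hl1 : convw (Iv a c) l1.
        by refine (convw_supp h1 _) => j hj; rewrite inE hI.
      have aIac : a \in Iv a c by rewrite inE leqnn ltnW.
      have bIac : b \in Iv a c by rewrite inE ltnW // ltnW.
      have [l2 [h2 e2 [hI2|hO2]]] := split_chord ab aIac bIac hl1.
      -- have hl2 : convw (Iv a b) l2.
           by refine (convw_supp h2 _) => j hj; rewrite inE hI2.
         have [r rT hr] := piece_cover nab aIab bIab abs sT abT (subxx _) hl2.
         by exists r => //; rewrite -e1 -e2.
      -- pose A3 := Iv a c :&: Ov a b.
         have hl2 : convw A3 l2.
           refine (convw_supp h2 _) => j hj; rewrite inE (convw_in h2 hj) inE.
           exact: hO2.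
         have bA3 : b \in A3 by rewrite !inE (ltnW ab) (ltnW bc) leqnn orbT.
         have cA3 : c \in A3 by rewrite !inE (ltnW ac) leqnn (ltnW bc) orbT.
         have [l3 [h3 e3 [hI3|hO3]]] := split_chord bc bA3 cA3 hl2.
         ++ have hl3 : convw (Iv b c) l3.
              by refine (convw_supp h3 _) => j hj; rewrite inE hI3.
            have [r rT hr] := piece_cover nbc bIbc cIbc bcs sT bcT (subxx _) hl3.
            by exists r => //; rewrite -e1 -e2 -e3.
         ++ exists s => //; exists l3; split; last by rewrite -e1 -e2 -e3.
            refine (convw_supp h3 _) => j hj.
            have := convw_in h3 hj; rewrite !inE => /andP[h4 h5].
            by rewrite -!val_eqE /= -orbA; apply: ar6 => //; apply: hO3.
    * have hl1 : convw (Ov a c) l1.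
        by refine (convw_supp h1 _) => j hj; rewrite inE hO.
      have [r rT hr] := piece_cover nac aOac cOac acs sT acT (subxx _) hl1.
      by exists r => //; rewrite -e1.
  + move=> r r' /Tmem hr /Tmem hr' rr'; apply: nov_ok.
    have sOab : s \subset Ov a b.
      by apply/subsetP => j; rewrite !inE => /orP[/orP[]|] /eqP ->; rewrite ?leqnn ?(ltnW ab) ?(ltnW bc) ?(ltnW ac) ?orbT.
    have sObc : s \subset Ov b c.
      by apply/subsetP => j; rewrite !inE => /orP[/orP[]|] /eqP ->; rewrite ?leqnn ?(ltnW ab) ?(ltnW bc) ?(ltnW ac) ?orbT.
    have sIac : s \subset Iv a c.
      by apply/subsetP => j; rewrite !inE => /orP[/orP[]|] /eqP ->; rewrite ?leqnn ?(ltnW ab) ?(ltnW bc) ?(ltnW ac) ?orbT.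
    have IbcOab : Iv b c \subset Ov a b.
      by apply/subsetP => j; rewrite !inE => /andP[-> _]; rewrite orbT.
    have OacOab : Ov a c \subset Ov a b.
      apply/subsetP => j; rewrite !inE => /orP[-> //|h].
      by rewrite (leq_trans (ltnW bc) h) orbT.
    have OacObc : Ov a c \subset Ov b c.
      apply/subsetP => j; rewrite !inE => /orP[h|->]; last by rewrite orbT.
      by rewrite (leq_trans h (ltnW ab)).
    case: hr => [E1|h1|h1|h1]; case: hr' => [E2|h2|h2|h2]; rewrite ?E1 ?E2.
    * by rewrite E1 E2 eqxx in rr'.
    * exact: (sep ab (UF_sub h2) sOab).2.
    * exact: (sep bc (UF_sub h2) sObc).2.
    * exact: (sep ac sIac (UF_sub h2)).1.
    * exact: (sep ab (UF_sub h1) sOab).1.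
    * by move=> p; apply: UF_disj h1 h2.
    * exact: (sep ab (UF_sub h1) (subset_trans (UF_sub h2) IbcOab)).1.
    * exact: (sep ab (UF_sub h1) (subset_trans (UF_sub h2) OacOab)).1.
    * exact: (sep bc (UF_sub h1) sObc).1.
    * exact: (sep ab (UF_sub h2) (subset_trans (UF_sub h1) IbcOab)).2.
    * by move=> p; apply: UF_disj h1 h2.
    * exact: (sep bc (UF_sub h1) (subset_trans (UF_sub h2) OacObc)).1.
    * exact: (sep ac sIac (UF_sub h1)).2.
    * exact: (sep ab (UF_sub h2) (subset_trans (UF_sub h1) OacOab)).2.
    * exact: (sep bc (UF_sub h2) (subset_trans (UF_sub h1) OacObc)).2.
    * by move=> p; apply: UF_disj h1 h2.
- by exists s.
- move=> u hu _ hov; apply: le3T_of => r /Tmem.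
  have hu3 : (#|u| <= 3)%N by case: hu => ->.
  have hs3 : (#|s| <= 3)%N by rewrite card3.
  have HS : HSP u s := HS_of hu3 hs3 hov.
  case=> [->|h|h|h] //.
  + exact: UFh_I ab abs HS h.
  + exact: UFh_I bc bcs HS h.
  + exact: UFh_O ac acs HS h.
Qed.


Lemma ar7 (a x b k : nat) : x = a.+1 -> (a <= k <= b)%N -> ~~ [|| k == a, k == x | k == b] ->
  ((k < a) || (x < k < b))%N.
Proof. lia. Qed.
Lemma ar8 (a b z k N : nat) : b = a.+1 -> z = N.-1 -> (k < N)%N -> ((k <= a) || (b <= k))%N ->
  ~~ [|| k == a, k == b | k == z] -> ((k < a) || (b < k < z))%N.
Proof. lia. Qed.
Lemma ar9 (w a b k N : nat) : b = a.+1 -> w = a.-1 -> b.+1 = N -> (k < N)%N ->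
  ((k <= a) || (b <= k))%N -> ~~ [|| k == w, k == a | k == b] -> ((k < w) || (a < k < b))%N.
Proof. lia. Qed.

Lemma edge_r0 (a b : 'I_n) : (3 <= n)%N -> (a < b)%N ->
  exists2 r0, (r0 \in UF (Iv a b)) || (r0 \in UF (Ov a b)) & [set a; b] \subset r0.
Proof.
move=> hn ab.
case: (ltnP a.+1 b) => h1.
- pose x := Ordinal (ltn_trans h1 (ltn_ord b)).
  have ax : (a < x)%N by [].
  exists [set a; x; b].
    apply/orP; left; rewrite inE card3 // eqxx /=; apply/andP; split.
      apply/subsetP => j; rewrite !inE => /orP[/orP[]|] /eqP ->.
      + by rewrite leqnn ltnW.
      + by rewrite ltnW // ltnW.
      + by rewrite leqnn ltnW.
    apply/forallP => k; apply/implyP; rewrite !inE => /andP[hk]; rewrite -!val_eqE /= => hk'.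
    apply: cub_neg => //; apply: (ar7 (x := x)) => //; by rewrite orbA.
  by apply/subsetP => j; rewrite !inE => /orP[] ->; rewrite ?orbT.
- have bE : (b : nat) = a.+1 by apply/eqP; rewrite eqn_leq h1 ab.
  case: (ltnP b.+1 n) => h2.
  + have zn : (n.-1 < n)%N by case: (n) hn.
    pose z := Ordinal zn.
    have bz : (b < z)%N by rewrite /= -ltnS prednK //; case: (n) hn.
    exists [set a; b; z].
      apply/orP; right; rewrite inE card3 // eqxx /=; apply/andP; split.
        apply/subsetP => j; rewrite !inE => /orP[/orP[]|] /eqP ->.
        + by rewrite leqnn.
        + by rewrite leqnn orbT.
        + by rewrite (ltnW bz) orbT.
      apply/forallP => k; apply/implyP; rewrite !inE => /andP[hk]; rewrite -!val_eqE /= => hk'.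
      apply: cub_neg => //; apply: (ar8 (N := n)) => //; by rewrite orbA.
    by apply/subsetP => j; rewrite !inE => /orP[] ->; rewrite ?orbT.
  + have a1 : (0 < a)%N by lia.
    have wn : (a.-1 < n)%N by apply: leq_ltn_trans (leq_pred a) (ltn_ord a).
    pose w := Ordinal wn.
    have wa : (w < a)%N by rewrite /= prednK // ltnSn.
    have bN : b.+1 = n by have := ltn_ord b; lia.
    exists [set w; a; b].
      apply/orP; right; rewrite inE card3 // eqxx /=; apply/andP; split.
        apply/subsetP => j; rewrite !inE => /orP[/orP[]|] /eqP ->.
        + by rewrite ltnW.
        + by rewrite leqnn.
        + by rewrite leqnn orbT.
      apply/forallP => k; apply/implyP; rewrite !inE => /andP[hk]; rewrite -!val_eqE /= => hk'.
      apply: cub_neg => //; apply: (ar9 (a := a) (N := n)) => //; by rewrite orbA.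
    by apply/subsetP => j; rewrite !inE => /orP[] ->; rewrite ?orbT.
Qed.


Lemma main_edge (a b : 'I_n) : (3 <= n)%N -> (a < b)%N ->
  exists T : {set {set 'I_n}},
    [/\ is_triangulation t T, simplex_of [set a; b] T &
        forall u : {set 'I_n}, edge_or_triangle u -> u != [set a; b] ->
          (~ overlap t u [set a; b] \/ below3 t u [set a; b]) -> le3T t u T].
Proof.
move=> hn ab.
set s := [set a; b].
pose T := UF (Iv a b) :|: UF (Ov a b).
have [r0 r0U r0s] := edge_r0 hn ab.
have r0T : r0 \in T by rewrite in_setU.
have IT : UF (Iv a b) \subset T by apply/subsetP => r h; rewrite in_setU h.
have OT : UF (Ov a b) \subset T by apply/subsetP => r h; rewrite in_setU h orbT.
have nab : a != b by apply: ord_ltP.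
have aI : a \in Iv a b by rewrite inE leqnn ltnW.
have bI : b \in Iv a b by rewrite inE leqnn ltnW.
have aO : a \in Ov a b by rewrite inE leqnn.
have bO : b \in Ov a b by rewrite inE leqnn orbT.
exists T; split.
- split.
  + by move=> r; rewrite in_setU => /orP[] /UF_card.
  + move=> p; split; last first.
      by case=> r _ hr; apply: in_conv_sub hr; apply: subsetT.
    case=> l [hl ->].
    change (exists2 r, r \in T & in_conv t r (pt l)).
    have [l1 [h1 e1 [hI|hO]]] := split_chord ab (in_setT a) (in_setT b) hl.
    * have hl1 : convw (Iv a b) l1.
        by refine (convw_supp h1 _) => j hj; rewrite inE hI.
      have [r rT hr] := piece_cover nab aI bI r0s r0T IT (subxx _) hl1.
      by exists r => //; rewrite -e1.
    * have hl1 : convw (Ov a b) l1.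
        by refine (convw_supp h1 _) => j hj; rewrite inE hO.
      have [r rT hr] := piece_cover nab aO bO r0s r0T OT (subxx _) hl1.
      by exists r => //; rewrite -e1.
  + move=> r r'; rewrite !in_setU => hr hr' rr'; apply: nov_ok.
    case/orP: hr => h1; case/orP: hr' => h2.
    * by move=> p; apply: UF_disj h1 h2.
    * exact: (sep ab (UF_sub h1) (UF_sub h2)).1.
    * exact: (sep ab (UF_sub h2) (UF_sub h1)).2.
    * by move=> p; apply: UF_disj h1 h2.
- by exists r0.
- move=> u hu _ hov; apply: le3T_of => r; rewrite in_setU.
  have hu3 : (#|u| <= 3)%N by case: hu => ->.
  have hs3 : (#|s| <= 3)%N by rewrite cards2 nab.
  have HS : HSP u s := HS_of hu3 hs3 hov.
  case/orP => h.
  + exact: UFh_I ab (subxx _) HS h.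
  + exact: UFh_O ab (subxx _) HS h.
Qed.

End Main.

Unset Implicit Arguments.
Set Strict Implicit.

Theorem theorem3p1 (R : realType) (n : nat) (t : 'I_n -> R)
    (ht : forall i j : 'I_n, (i < j)%N -> t i < t j) (hn : (3 <= n)%N)
    (s : {set 'I_n}) (hs : edge_or_triangle s) :
  exists T : {set {set 'I_n}},
    [/\ is_triangulation t T, simplex_of s T &
        forall u : {set 'I_n}, edge_or_triangle u -> u != s ->
          (~ overlap t u s \/ below3 t u s) -> le3T t u T].
Proof.
case: hs => hs.
- have : #|s| == 2%N by rewrite hs.
  case/cards2P => x [y [xy ->]].
  case: (ltngtP x y) => h.
  + exact: (@main_edge R n t ht x y hn h).
  + have E : [set x; y] = [set y; x] by apply/setP => j; rewrite !inE orbC.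
    rewrite E; exact: (@main_edge R n t ht y x hn h).
  + by move: xy; rewrite (val_inj h) eqxx.
- have [x [y [z [xy yz ->]]]] := card3E hs.
  exact (main_tri ht xy yz).
Qed.
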